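(* Let $A,C,\varepsilon_g$ be positive constants with $\varepsilon_g<1/2$, and let $r>0$ be a fixed constant. For $N$ sufficiently large the following holds: whenever $x<y$ are in $I_W$ with $|x-y|\ge N^{\varepsilon_g}$, there do not exist real numbers $D_1,D_2,D_3,D_4$ with $r^2\le D_1^2+D_2^2+D_3^2+D_4^2\le N^{A}$ such that \[\sum_{i=1}^n\|D_1b_i(x)+D_2c_i(x)+D_3b_i(y)+D_4c_i(y)\|_{\mathbb R/\mathbb Z}^2\le C\log N.\]
   Context: Let $0<c_1<c_2$ be constants, $n$ a large integer and $M$ a large parameter (possibly growing with $n$) with $I_W:=[c_1M,c_2M]\subset[0,\sqrt n-M]$; set $N:=M$. For $x>0$ and $1\le i\le n$ let $b_i(x)=\sqrt N\,e^{-x^2/2}\,x^i/\sqrt{i!}$ and $c_i(x)=b_i'(x)=\sqrt N\,e^{-x^2/2}\,\frac{i-x^2}{x}\,\frac{x^i}{\sqrt{i!}}$. For $t\in\mathbb R$, $\|t\|_{\mathbb R/\mathbb Z}$ denotes the distance from $t$ to the nearest integer. *)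

(* Defs.v *)
From Stdlib Require Import Reals Arith.
Open Scope R_scope.

Fixpoint sum1 (n : nat) (f : nat -> R) : R :=
  match n with
  | O => 0
  | S m => sum1 m f + f (S m)
  end.

(* distance from t to the nearest integer, ||t||_{R/Z};
   Int_part t is floor t. *)
Definition distZ (t : R) : R :=
  let fr := t - IZR (Int_part t) in Rmin fr (1 - fr).

Definition b_fun (N : R) (i : nat) (x : R) : R :=
  sqrt N * exp (- x ^ 2 / 2) * x ^ i / sqrt (INR (Factorial.fact i)).

(* c_i(x) = b_i'(x) = sqrt N e^{-x^2/2} ((i - x^2)/x) x^i / sqrt(i!) *)
Definition c_fun (N : R) (i : nat) (x : R) : R :=
  sqrt N * exp (- x ^ 2 / 2) * ((INR i - x ^ 2) / x) * x ^ i / sqrt (INR (Factorial.fact i)).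

(* Main.v *)
Require Import Defs.
From Stdlib Require Import Reals Lra Lia ZArith Classical.
From Coquelicot Require Import Coquelicot.
Open Scope R_scope.


Lemma ln2_lower (t : R) : 0 <= t -> 2 * t / (2 + t) <= ln (1 + t).
Proof.
  intros Ht.
  destruct (Req_dec t 0) as [->|Hne].
  { replace (1+0) with 1 by ring. rewrite ln_1. unfold Rdiv. lra. }
  set (f := fun u => ln (1 + u) - 2 * u / (2 + u)).
  set (df := fun u => / (1 + u) - 4 / (2 + u)^2).
  assert (Hd : forall u, -1/2 < u -> is_derive f u (df u)).
  { intros u Hu. unfold f, df. auto_derive.
    - lra.
    - field. lra. }
  destruct (MVT_gen f 0 t df) as [c [Hc Hfc]].
  - intros u Hu. apply Hd. rewrite Rmin_left in Hu by lra. lra.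
  - intros u Hu. rewrite Rmin_left in Hu by lra. rewrite Rmax_right in Hu by lra.
    apply continuity_pt_filterlim. apply (ex_derive_continuous (K:=R_AbsRing) (V:=R_NormedModule)).
    eexists. apply Hd. lra.
  - rewrite Rmin_left in Hc by lra. rewrite Rmax_right in Hc by lra.
    assert (Hdf : 0 <= df c).
    { unfold df. replace (/ (1 + c) - 4 / (2 + c) ^ 2) with (c^2 / ((1+c)*(2+c)^2)) by (field; lra).
      apply Rmult_le_pos. nra. left. apply Rinv_0_lt_compat. apply Rmult_lt_0_compat; nra. }
    unfold f in Hfc. replace (1+0) with 1 in Hfc by ring. rewrite ln_1 in Hfc.
    replace (2 * 0 / (2 + 0)) with 0 in Hfc by (unfold Rdiv; ring).
    assert (0 <= df c * (t - 0)) by (apply Rmult_le_pos; lra). lra.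
Qed.

Lemma ln_le_sub1 (w : R) : 0 < w -> ln w <= w - 1.
Proof. intros Hw. pose proof (exp_ineq1_le (ln w)). rewrite exp_ln in H by lra. lra. Qed.

Fixpoint rsum (a len : nat) (f : nat -> R) : R :=
  match len with O => 0 | S l => rsum a l f + f (a + l)%nat end.

Lemma rsum_app a l1 l2 f : rsum a (l1 + l2) f = rsum a l1 f + rsum (a + l1) l2 f.
Proof.
  induction l2 as [|l2 IH]; simpl.
  - rewrite Nat.add_0_r. ring.
  - rewrite Nat.add_succ_r. simpl. rewrite IH. replace (a + (l1 + l2))%nat with (a + l1 + l2)%nat by lia. ring.
Qed.

Lemma rsum_ext a l f h : (forall k, (k < l)%nat -> f (a + k)%nat = h (a + k)%nat) -> rsum a l f = rsum a l h.
Proof.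
  induction l as [|l IH]; intros H; simpl; auto.
  rewrite IH by (intros; apply H; lia). rewrite H by lia. reflexivity.
Qed.

Lemma rsum_plus a l f h : rsum a l (fun i => f i + h i) = rsum a l f + rsum a l h.
Proof. induction l; simpl; [ring| rewrite IHl; ring]. Qed.

Lemma rsum_shift a q l f : rsum (a + q) l f = rsum a l (fun i => f (i + q)%nat).
Proof. induction l; simpl; auto. rewrite IHl. replace (a + q + l)%nat with (a + l + q)%nat by lia. reflexivity. Qed.

Lemma rsum_pairs a q f : rsum a (q + q) f = rsum a q (fun i => f i + f (i + q)%nat).
Proof. rewrite rsum_app, rsum_plus, rsum_shift. reflexivity. Qed.

Lemma rsum_ge a l f b : (forall k, (k < l)%nat -> b <= f (a + k)%nat) -> INR l * b <= rsum a l f.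
Proof.
  induction l as [|l IH]; intros H.
  - simpl. lra.
  - rewrite S_INR. simpl rsum. specialize (IH (fun k Hk => H k ltac:(lia))). specialize (H l ltac:(lia)). lra.
Qed.

Lemma rsum_nonneg a l f : (forall i, 0 <= f i) -> 0 <= rsum a l f.
Proof. intros H; induction l; simpl; [lra| specialize (H (a+l)%nat); lra]. Qed.

Lemma sum1_rsum n f : sum1 n f = rsum 1 n f.
Proof. induction n; simpl; auto. rewrite IHn. reflexivity. Qed.

Lemma sum1_ge_rsum n a l f : (forall i, 0 <= f i) -> (1 <= a)%nat -> (a + l <= n + 1)%nat ->
  rsum a l f <= sum1 n f.
Proof.
  intros Hf Ha Hn. rewrite sum1_rsum.
  replace n with ((a - 1) + (l + (n + 1 - a - l)))%nat by lia.
  rewrite rsum_app. replace (1 + (a - 1))%nat with a by lia. rewrite rsum_app.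
  pose proof (rsum_nonneg 1 (a-1) f Hf). pose proof (rsum_nonneg (a + l) (n + 1 - a - l) f Hf). lra.
Qed.

Lemma first_index (P : nat -> Prop) (a b : nat) :
  (exists j, (a <= j <= b)%nat /\ P j) ->
  exists j, (a <= j <= b)%nat /\ P j /\ forall i, (a <= i < j)%nat -> ~ P i.
Proof.
  induction b as [|b IH]; intros [j0 [Hj0 Pj0]].
  - exists j0. split; [lia|]. split; auto. intros; lia.
  - destruct (classic (exists j, (a <= j <= b)%nat /\ P j)) as [Hex|Hnex].
    + destruct (IH Hex) as [j [Hj1 [Hj2 Hj3]]]. exists j. split; [lia|]. auto.
    + exists j0. split; [lia|]. split; auto. intros i Hi Pi. apply Hnex. exists i. split; [lia|auto].
Qed.

Lemma bernoulli (u : R) (k : nat) : 0 <= u <= 1 -> 1 - INR k * u <= (1 - u) ^ k.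
Proof.
  intros Hu. induction k as [|k IH].
  - simpl. lra.
  - rewrite S_INR. simpl pow.
    assert (0 <= INR k) by apply pos_INR.
    destruct (Rle_dec 0 (1 - INR k * u)).
    + assert ((1-u) * (1 - INR k * u) <= (1-u) * (1-u)^k) by (apply Rmult_le_compat_l; lra). nra.
    + assert (0 <= (1-u)^k) by (apply pow_le; lra). nra.
Qed.

Lemma sq_lower (a e : R) : a^2/2 - e^2 <= (a + e)^2.
Proof. pose proof (pow2_ge_0 (a + 2*e)). nra. Qed.

Lemma pair_alg (g1 g2 L1 L2 v1 v2 gmin gmax eta : R) :
  Rabs (v1 - g1 * L1) <= g1 * eta -> Rabs (v2 - g2 * L2) <= g2 * eta ->
  0 <= gmin <= g1 -> g1 <= gmax -> gmin <= g2 -> g2 <= gmax -> 0 <= eta ->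
  gmin^2 * (L1^2 + L2^2) / 2 - 2 * gmax^2 * eta^2 <= v1^2 + v2^2.
Proof.
  intros H1 H2 Hg1 Hg1' Hg2 Hg2' He.
  assert (E1 : (v1 - g1*L1)^2 <= (g1*eta)^2).
  { pose proof (pow2_abs (v1 - g1*L1)) as Ha. rewrite <- Ha. pose proof (Rabs_pos (v1 - g1*L1)). nra. }
  assert (E2 : (v2 - g2*L2)^2 <= (g2*eta)^2).
  { pose proof (pow2_abs (v2 - g2*L2)) as Ha. rewrite <- Ha. pose proof (Rabs_pos (v2 - g2*L2)). nra. }
  pose proof (sq_lower (g1*L1) (v1 - g1*L1)) as S1. replace (g1*L1 + (v1 - g1*L1)) with v1 in S1 by ring.
  pose proof (sq_lower (g2*L2) (v2 - g2*L2)) as S2. replace (g2*L2 + (v2 - g2*L2)) with v2 in S2 by ring.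
  assert (gmin^2 * L1^2 <= (g1*L1)^2) by (replace ((g1*L1)^2) with (g1^2 * L1^2) by ring; apply Rmult_le_compat_r; nra).
  assert (gmin^2 * L2^2 <= (g2*L2)^2) by (replace ((g2*L2)^2) with (g2^2 * L2^2) by ring; apply Rmult_le_compat_r; nra).
  assert ((g1*eta)^2 <= gmax^2 * eta^2) by (replace ((g1*eta)^2) with (g1^2 * eta^2) by ring; apply Rmult_le_compat_r; nra).
  assert ((g2*eta)^2 <= gmax^2 * eta^2) by (replace ((g2*eta)^2) with (g2^2 * eta^2) by ring; apply Rmult_le_compat_r; nra).
  lra.
Qed.

Lemma lin_pair (P1 P2 s w S : R) : 1 <= S -> 0 <= s -> 0 <= w -> s + w <= S ->
  (P1^2 + P2^2) * w^2 / (32 * S^2) <= (P1 + P2 * s)^2 + (P1 + P2 * (s + w))^2.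
Proof.
  intros HS Hs Hw Hsw.
  assert (HS2 : 1 <= S^2) by nra.
  assert (Hw2 : w^2 <= S^2) by nra.
  destruct (Rle_dec ((P1^2 + P2^2) / (16 * S^2)) (P2^2)) as [Hc|Hc].
  -
    assert (H1 : (P2 * w)^2 / 2 <= (P1 + P2 * s)^2 + (P1 + P2 * (s + w))^2) by (pose proof (pow2_ge_0 (2*(P1+P2*s) + P2*w)); nra).
    assert (H2 : (P1^2 + P2^2) * w^2 / (32 * S^2) <= (P2*w)^2/2).
    { assert (S <> 0) by lra. replace ((P1^2 + P2^2) * w^2 / (32 * S^2)) with (((P1^2 + P2^2) / (16 * S^2)) * w^2 / 2) by (field; lra).
      assert (E: (P2*w)^2/2 = P2^2 * w^2 / 2) by (unfold Rdiv; ring). rewrite E.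
      apply Rmult_le_compat_r; [lra|]. apply Rmult_le_compat_r; nra. }
    lra.
  - apply Rnot_le_lt in Hc.
    assert (HP2 : P2^2 * 16 * S^2 < P1^2 + P2^2).
    { apply (Rmult_lt_compat_r (16 * S^2)) in Hc; [|nra]. field_simplify in Hc; lra. }
    assert (Hps : (P2 * s)^2 <= P2^2 * S^2) by (replace ((P2*s)^2) with (P2^2*s^2) by ring; apply Rmult_le_compat_l; nra).
    assert (Hq : 0 <= P1^2 + P2^2) by nra.
    assert (H1 : (P1^2)/2 - (P2*s)^2 <= (P1 + P2*s)^2) by apply sq_lower.
    assert (H3 : (P1^2 + P2^2) * w^2 / (32 * S^2) <= (P1^2+P2^2)/32).
    { apply Rle_div_l; [nra|]. replace ((P1^2+P2^2)/32 * (32*S^2)) with ((P1^2+P2^2)*S^2) by field.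
      apply Rmult_le_compat_l; lra. }
    assert (0 <= (P1 + P2 * (s + w))^2) by apply pow2_ge_0.
    assert (P2^2 <= P2^2 * S^2) by (pose proof (pow2_ge_0 P2); nra).
    assert (16 * (P2^2 * S^2) < P1^2 + P2^2) by lra.
    lra.
Qed.

Lemma distZ_small (t : R) : Rabs t <= 1/2 -> distZ t = Rabs t.
Proof.
  intros Ht. unfold distZ.
  destruct (Rle_or_lt 0 t) as [H0|H0].
  - rewrite Rabs_pos_eq in * by lra.
    rewrite <- (Int_part_spec t 0) by (simpl; lra). simpl.
    unfold Rmin. destruct (Rle_dec (t - 0) (1 - (t - 0))); lra.
  - rewrite Rabs_left in * by lra.
    rewrite <- (Int_part_spec t (-1)) by (simpl; lra). simpl.
    unfold Rmin. destruct (Rle_dec (t - -1) (1 - (t - -1))); lra.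
Qed.

Lemma distZ_nonneg_sq t : 0 <= distZ t ^ 2.
Proof. apply pow2_ge_0. Qed.

Lemma final_alg (Q p Sw tau eta w X : R) :
  p * p = Q -> 0 < Q -> 1 <= Sw -> 1/(8*Sw) <= w -> 0 < tau ->
  eta^2 <= Q * tau^2 / (1024 * Sw^4) ->
  (tau/(p*(2+Sw)))^2 * (Q * w^2 / (32 * Sw^2)) / 2 - 2 * (1/(4*p*(2+Sw)))^2 * eta^2 <= X ->
  tau^2 / (8192 * Sw^4 * (2+Sw)^2) <= X.
Proof.
  intros Hp HQ HS Hw Ht He HX.
  assert (Hp0 : p <> 0) by (intro; subst; lra).
  set (D := (2+Sw)^2) in *.
  assert (HD : 0 < D) by (unfold D; nra).
  assert (E : (tau/(p*(2+Sw)))^2 * (Q * w^2 / (32 * Sw^2)) / 2 - 2 * (1/(4*p*(2+Sw)))^2 * eta^2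
             = (tau^2 * w^2 / (64 * Sw^2) - eta^2 / (8 * Q)) / D).
  { unfold D. rewrite <- Hp. field. repeat split; lra. }
  rewrite E in HX.
  assert (Hw2 : 1/(64 * Sw^2) <= w^2).
  { replace (1/(64*Sw^2)) with ((1/(8*Sw))^2) by (field; lra).
    assert (0 < 1/(8*Sw)) by (apply Rdiv_lt_0_compat; lra). nra. }
  assert (H1 : tau^2 / (4096 * Sw^4) <= tau^2 * w^2 / (64 * Sw^2)).
  { replace (tau^2 / (4096 * Sw^4)) with (tau^2 * (1/(64*Sw^2)) / (64 * Sw^2)) by (field; lra).
    unfold Rdiv at 1 3. apply Rmult_le_compat_r.
    - left. apply Rinv_0_lt_compat. nra.
    - apply Rmult_le_compat_l; nra. }
  assert (H2 : eta^2 / (8 * Q) <= tau^2 / (8192 * Sw^4)).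
  { apply Rle_div_l; [lra|].
    replace (tau^2 / (8192 * Sw^4) * (8 * Q)) with (Q * tau^2 / (1024 * Sw^4)) by (field; lra). lra. }
  assert (H3 : tau^2 / (8192 * Sw^4) <= tau^2 * w^2 / (64 * Sw^2) - eta^2 / (8 * Q)).
  { replace (tau^2 / (8192 * Sw^4)) with (tau^2 / (4096 * Sw^4) - tau^2 / (8192 * Sw^4)) at 1 by (field; lra). lra. }
  replace (tau^2 / (8192 * Sw^4 * D)) with ((tau^2 / (8192 * Sw^4)) / D) by (field; lra).
  eapply Rle_trans; [|exact HX].
  unfold Rdiv at 1 3. apply Rmult_le_compat_r; [left; apply Rinv_0_lt_compat; lra| lra].
Qed.

Lemma abs_le_sqrt (a b : R) : Rabs a <= sqrt (a^2 + b^2).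
Proof.
  rewrite <- sqrt_Rsqr_abs. apply sqrt_le_1_alt. unfold Rsqr. nra.
Qed.

Lemma core (z Sw tau eta P1 P2 : R) (ia ib : nat) (g v : nat -> R) :
  1 <= Sw -> 8 * Sw <= z ->
  (forall i, 0 < g i) ->
  (forall i, g (S i) = g i * z / sqrt (INR (S i))) ->
  z^2 <= INR ia -> INR ib <= z^2 + z*Sw -> (ia <= ib)%nat ->
  0 < P1^2 + P2^2 ->
  0 < tau -> tau <= 1/8 ->
  2*tau <= g ia * sqrt(P1^2+P2^2) * (2+Sw) ->
  g ib * sqrt(P1^2+P2^2) * (2+Sw) < tau ->
  0 <= eta -> eta <= sqrt(P1^2+P2^2) ->
  eta^2 <= (P1^2+P2^2) * tau^2 / (1024 * Sw^4) ->
  (forall i, (ia <= i <= ib)%nat -> Rabs (v i - g i * (P1 + P2 * ((INR i - z^2)/z))) <= g i * eta) ->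
  exists j q, (ia <= j)%nat /\ (j + (q+q) <= ib + 1)%nat /\ z/(8*Sw) <= INR q /\
     INR q * (tau^2 / (8192 * Sw^4 * (2+Sw)^2)) <= rsum j (q+q) (fun i => distZ (v i) ^ 2).
Proof.
  intros HS Hz Hg Hrat Hia Hib Hiab HQ Ht0 Ht8 HFa HFb He0 He1 He2 Hv.
  set (Q := P1^2 + P2^2) in *.
  set (p := sqrt Q) in *.
  assert (Hp0 : 0 < p) by (apply sqrt_lt_R0; lra).
  assert (Hpp : p * p = Q) by (apply sqrt_sqrt; lra).
  assert (Hz0 : 0 < z) by lra.
  set (F := fun i => g i * p * (2 + Sw)).
  set (rho := 1 - Sw / z).
  assert (Hu : 0 < Sw / z <= 1/8).
  { split. apply Rdiv_lt_0_compat; lra. apply Rle_div_l; lra. }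
  assert (Hmono : forall i, (ia <= i)%nat -> g (S i) <= g i).
  { intros i Hi. rewrite Hrat.
    assert (Hs : z <= sqrt (INR (S i))).
    { rewrite <- (sqrt_square z) by lra. apply sqrt_le_1_alt.
      rewrite S_INR. apply le_INR in Hi. nra. }
    apply Rle_div_l; [lra|]. pose proof (Hg i). nra. }
  assert (Hlow : forall i, (S i <= ib)%nat -> g i * rho <= g (S i)).
  { intros i Hi. rewrite Hrat.
    assert (Hs0 : 0 < sqrt (INR (S i))) by (apply sqrt_lt_R0; apply lt_0_INR; lia).
    assert (Hs : rho * sqrt (INR (S i)) <= z).
    { assert (Hsi : INR (S i) <= z^2 + z*Sw) by (apply le_INR in Hi; lra).
      assert (Hr2 : rho^2 * (z^2 + z*Sw) <= z^2).
      { assert (E : rho^2 * (z^2 + z*Sw) = (z - Sw) * (z^2 - Sw^2) / z) by (unfold rho; field; lra).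
        rewrite E. apply Rle_div_l; [lra|]. nra. }
      assert (Hrho : 0 <= rho) by (unfold rho; lra).
      assert (Hsq : (rho * sqrt (INR (S i)))^2 <= z^2).
      { rewrite Rpow_mult_distr. rewrite pow2_sqrt by (apply pos_INR).
        pose proof (pos_INR (S i)). nra. }
      assert (0 <= rho * sqrt (INR (S i))) by nra. nra. }
    apply (proj1 (Rle_div_r _ _ _ Hs0)). pose proof (Hg i).
    assert (g i * (rho * sqrt (INR (S i))) <= g i * z) by (apply Rmult_le_compat_l; lra). lra. }
  assert (HmonoK : forall k i, (ia <= i)%nat -> g (i + k)%nat <= g i).
  { induction k as [|k IH]; intros i Hi.
    - rewrite Nat.add_0_r. lra.
    - rewrite Nat.add_succ_r. eapply Rle_trans; [apply Hmono; lia| apply IH; lia]. }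
  assert (Hrho0 : 0 < rho <= 1) by (unfold rho; lra).
  assert (HlowK : forall k i, (i + k <= ib)%nat -> g i * rho ^ k <= g (i + k)%nat).
  { induction k as [|k IH]; intros i Hi.
    - rewrite Nat.add_0_r. simpl. lra.
    - rewrite Nat.add_succ_r. eapply Rle_trans; [|apply Hlow; lia].
      simpl. specialize (IH i ltac:(lia)). nra. }
  assert (HF0 : forall i, 0 < F i) by (intros i; unfold F; pose proof (Hg i); apply Rmult_lt_0_compat; [apply Rmult_lt_0_compat|]; lra).
  destruct (first_index (fun i => F i <= 1/4) ia ib) as [j1 [Hj1 [Pj1 Mj1]]].
  { exists ib. split; [lia|]. unfold F; simpl; lra. }
  destruct (first_index (fun i => F i < tau) j1 ib) as [j2 [Hj2 [Pj2 Mj2]]].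
  { exists ib. split; [lia|]. unfold F; simpl; lra. }
  simpl in Pj1, Pj2.
  assert (Hzone : forall i, (j1 <= i < j2)%nat -> tau <= F i <= 1/4).
  { intros i Hi. split.
    - apply Rnot_lt_le. apply Mj2. lia.
    - eapply Rle_trans; [|exact Pj1]. unfold F.
      replace i with (j1 + (i - j1))%nat by lia.
      pose proof (HmonoK (i - j1)%nat j1 ltac:(lia)). pose proof (Hg j1).
      apply Rmult_le_compat_r; [lra|]. apply Rmult_le_compat_r; lra. }
  assert (HFj1 : 2 * tau * rho <= F j1).
  { destruct (Nat.eq_dec j1 ia) as [->|Hne].
    - unfold F. nra.
    - assert (Hn : ~ F (j1 - 1)%nat <= 1/4) by (apply Mj1; lia).
      apply Rnot_le_lt in Hn.
      pose proof (Hlow (j1 - 1)%nat ltac:(lia)) as Hl.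
      replace (S (j1 - 1)) with j1 in Hl by lia.
      unfold F in *. assert (0 < p * (2 + Sw)) by nra. nra. }
  set (m := (j2 - j1)%nat).
  assert (HFj2 : F j1 * rho ^ m <= F j2).
  { unfold F. pose proof (HlowK m j1 ltac:(unfold m; lia)) as H.
    replace (j1 + m)%nat with j2 in H by (unfold m; lia).
    assert (0 < p * (2 + Sw)) by nra. nra. }
  assert (Hm : z / (2 * Sw) < INR m + 1).
  { pose proof (bernoulli (Sw/z) m ltac:(lra)) as Hb. fold rho in Hb.
    assert (Hpw : 0 <= rho ^ m) by (apply pow_le; lra).
    assert (H1 : 2 * tau * rho * rho ^ m < tau) by nra.
    assert (H2 : rho * rho ^ m < 1/2) by nra.
    assert (H3 : rho * (1 - INR m * (Sw/z)) <= rho * rho^m) by (apply Rmult_le_compat_l; lra).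
    pose proof (pos_INR m).
    assert (H4 : 1 - (INR m + 1) * (Sw / z) <= rho * (1 - INR m * (Sw/z))).
    { assert (0 <= INR m * ((Sw/z)*(Sw/z))) by (apply Rmult_le_pos; nra). unfold rho. nra. }
    assert (H5 : 1/2 < (INR m + 1) * (Sw / z)) by lra.
    apply Rlt_div_l; [lra|].
    replace ((INR m + 1) * (2 * Sw)) with (2 * z * ((INR m + 1) * (Sw / z))) by (field; lra).
    nra. }
  set (q := (m / 2)%nat).
  assert (Hq2 : (q + q <= m)%nat /\ (m <= q + q + 1)%nat).
  { unfold q. pose proof (Nat.div_mod m 2 ltac:(lia)). pose proof (Nat.mod_upper_bound m 2 ltac:(lia)). lia. }
  assert (Hqr : INR m <= 2 * INR q + 1).
  { replace (2 * INR q + 1) with (INR (q + q + 1)) by (rewrite !plus_INR; simpl; ring). apply le_INR; lia. }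
  assert (Hz8 : 1 <= z / (8 * Sw)) by (apply Rle_div_r; lra).
  assert (Hqz : z / (8 * Sw) <= INR q).
  { assert (E : z / (2 * Sw) = 4 * (z / (8 * Sw))) by (field; lra). lra. }
  exists j1, q. split; [lia|]. split; [unfold m in Hq2; lia|]. split; [exact Hqz|].
  rewrite rsum_pairs. apply rsum_ge. intros k Hk.
  set (i := (j1 + k)%nat).
  assert (Hz1 : tau <= F i <= 1/4) by (apply Hzone; unfold i, m in *; lia).
  assert (Hz2 : tau <= F (i + q)%nat <= 1/4) by (apply Hzone; unfold i, m in *; lia).
  assert (Hin1 : (ia <= i <= ib)%nat) by (unfold i, m in *; lia).
  assert (Hin2 : (ia <= i + q <= ib)%nat) by (unfold i, m in *; lia).
  set (s := (INR i - z^2)/z).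
  set (w := INR q / z).
  assert (Hs0 : 0 <= s) by (unfold s; apply Rle_div_r; [lra|]; assert (Hq' := le_INR _ _ (proj1 Hin1)); lra).
  assert (Hw0 : 0 <= w) by (unfold w; apply Rle_div_r; [lra|]; pose proof (pos_INR q); lra).
  assert (Hsw : s + w <= Sw).
  { unfold s, w. replace ((INR i - z^2)/z + INR q / z) with ((INR (i + q) - z^2)/z) by (rewrite plus_INR; field; lra).
    apply Rle_div_l; [lra|]. destruct Hin2 as [_ Hin2]. apply le_INR in Hin2. lra. }
  assert (Hs' : (INR (i + q) - z^2)/z = s + w) by (unfold s, w; rewrite plus_INR; field; lra).
  assert (HL : forall t, (ia <= t <= ib)%nat -> 0 <= (INR t - z^2)/z <= Sw ->
      tau <= F t <= 1/4 -> distZ (v t) ^ 2 = v t ^ 2).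
  { intros t Ht Hst HFt. rewrite distZ_small.
    - rewrite <- (pow2_abs (v t)). reflexivity.
    - pose proof (Hv t Ht) as Hvt.
      pose proof (abs_le_sqrt P1 P2) as A1. pose proof (abs_le_sqrt P2 P1) as A2.
      fold Q in A1. replace (P2^2 + P1^2) with Q in A2 by (unfold Q; ring). fold p in A1, A2.
      assert (HLt : Rabs (P1 + P2 * ((INR t - z^2)/z)) <= p * (1 + Sw)).
      { eapply Rle_trans; [apply Rabs_triang|]. rewrite Rabs_mult.
        rewrite (Rabs_pos_eq ((INR t - z^2)/z)) by lra. nra. }
      assert (Hgt := Hg t).
      assert (Rabs (v t) <= g t * (p * (1 + Sw)) + g t * eta).
      { replace (v t) with ((v t - g t * (P1 + P2 * ((INR t - z ^ 2) / z))) + g t * (P1 + P2 * ((INR t - z ^ 2) / z))) at 1 by ring.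
        eapply Rle_trans; [apply Rabs_triang|]. rewrite Rabs_mult, (Rabs_pos_eq (g t)) by lra.
        assert (g t * Rabs (P1 + P2 * ((INR t - z ^ 2) / z)) <= g t * (p * (1 + Sw))) by (apply Rmult_le_compat_l; lra).
        lra. }
      unfold F in HFt. nra. }
  assert (Hsq1 : distZ (v i) ^ 2 = v i ^ 2) by (apply HL; auto; fold s; lra).
  assert (Hsq2 : distZ (v (i + q)%nat) ^ 2 = v (i+q)%nat ^ 2) by (apply HL; auto; rewrite Hs'; lra).
  rewrite Hsq1, Hsq2.
  apply (final_alg Q p Sw tau eta w); [exact Hpp|exact HQ|exact HS| |exact Ht0|exact He2|].
  { unfold w. apply (proj1 (Rle_div_r _ _ z ltac:(lra))). replace (1 / (8 * Sw) * z) with (z / (8 * Sw)) by (field; lra). lra. }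
  assert (Hc : 0 < p * (2 + Sw)) by nra.
  assert (Hgmin : forall t, tau <= F t <= 1/4 -> tau / (p * (2+Sw)) <= g t <= 1 / (4 * p * (2 + Sw))).
  { intros t Ht. unfold F in Ht. split.
    - apply Rle_div_l; [lra|]. nra.
    - apply Rle_div_r; [nra|]. nra. }
  pose proof (Hgmin i Hz1) as G1. pose proof (Hgmin (i+q)%nat Hz2) as G2.
  pose proof (lin_pair P1 P2 s w Sw HS Hs0 Hw0 Hsw) as LP. fold Q in LP.
  eapply Rle_trans; [|apply (pair_alg (g i) (g (i+q)%nat) (P1 + P2 * s) (P1 + P2 * (s + w)) (v i) (v (i+q)%nat) (tau / (p * (2+Sw))) (1 / (4 * p * (2 + Sw))) eta)].
  - assert (0 <= (tau / (p * (2 + Sw)))^2) by apply pow2_ge_0.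
    assert (Hm2 : (tau / (p * (2 + Sw))) ^ 2 * (Q * w ^ 2 / (32 * Sw ^ 2)) <= (tau / (p * (2 + Sw))) ^ 2 * ((P1 + P2 * s) ^ 2 + (P1 + P2 * (s + w)) ^ 2)) by (apply Rmult_le_compat_l; lra).
    lra.
  - apply Hv. exact Hin1.
  - rewrite <- Hs'. apply Hv. exact Hin2.
  - split; [|lra]. apply Rlt_le, Rdiv_lt_0_compat; lra.
  - lra.
  - lra.
  - lra.
  - lra.
Qed.

Lemma fact_S_INR i : INR (Factorial.fact (S i)) = INR (S i) * INR (Factorial.fact i).
Proof. change (Factorial.fact (S i)) with (S i * Factorial.fact i)%nat. apply mult_INR. Qed.

Lemma stirling (i : nat) : (1 <= i)%nat ->
  INR i * ln (INR i) - INR i <= ln (INR (Factorial.fact i)) /\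
  ln (INR (Factorial.fact i)) <= 1 + ln (INR i) / 2 + INR i * ln (INR i) - INR i.
Proof.
  intros Hi. induction i as [|i IH]; [lia|].
  destruct (Nat.eq_dec i 0) as [->|Hne].
  - simpl. rewrite ln_1. lra.
  - specialize (IH ltac:(lia)). rewrite fact_S_INR.
    assert (Ha : 1 <= INR i) by (apply (le_INR 1); lia).
    set (a := INR i) in *.
    assert (HS : INR (S i) = a + 1) by (rewrite S_INR; reflexivity).
    rewrite HS.
    assert (Hf : 0 < INR (Factorial.fact i)) by apply INR_fact_lt_0.
    rewrite ln_mult by lra.
    set (l := ln (1 + / a)).
    assert (Hl : ln (a + 1) = ln a + l).
    { unfold l. rewrite <- ln_mult by (try lra; assert (0 < /a) by (apply Rinv_0_lt_compat; lra); lra).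
      f_equal. field. lra. }
    rewrite Hl.
    assert (H1 : a * l <= 1).
    { assert (l <= / a) by (unfold l; pose proof (ln_le_sub1 (1 + /a)); assert (0 < /a) by (apply Rinv_0_lt_compat; lra); lra).
      assert (a * l <= a * / a) by (apply Rmult_le_compat_l; lra). rewrite Rinv_r in H0 by lra. lra. }
    assert (H2 : 1 <= (a + 1/2) * l).
    { assert (0 < /a) by (apply Rinv_0_lt_compat; lra).
      pose proof (ln2_lower (/a) ltac:(lra)) as Hq. fold l in Hq.
      replace (2 * / a / (2 + / a)) with (2 / (2 * a + 1)) in Hq by (field; lra).
      apply Rle_div_l in Hq; [|lra]. lra. }
    destruct IH as [IH1 IH2]. split; lra.
Qed.

Lemma pow_exp (z : R) (i : nat) : 0 < z -> z ^ i = exp (INR i * ln z).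
Proof. intros Hz. rewrite <- Rpower_pow by lra. reflexivity. Qed.

Lemma sqrt_fact_pos i : 0 < sqrt (INR (Factorial.fact i)).
Proof. apply sqrt_lt_R0, INR_fact_lt_0. Qed.

Lemma bfun_exp N i z : 0 < z ->
  b_fun N i z = sqrt N / sqrt (INR (Factorial.fact i)) * exp (- z^2/2 + INR i * ln z).
Proof.
  intros Hz. unfold b_fun. rewrite exp_plus, <- (pow_exp z i) by lra.
  pose proof (sqrt_fact_pos i). field. lra.
Qed.

Lemma bfun_pos N i z : 0 < N -> 0 < z -> 0 < b_fun N i z.
Proof.
  intros HN Hz. rewrite bfun_exp by lra. pose proof (sqrt_fact_pos i).
  apply Rmult_lt_0_compat; [apply Rdiv_lt_0_compat; [apply sqrt_lt_R0; lra| lra]| apply exp_pos].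
Qed.

Lemma bfun_ratio N i z : 0 < z -> b_fun N (S i) z = b_fun N i z * z / sqrt (INR (S i)).
Proof.
  intros Hz. unfold b_fun. rewrite fact_S_INR. rewrite sqrt_mult by (try apply pos_INR; left; apply INR_fact_lt_0).
  pose proof (sqrt_fact_pos i). assert (0 < sqrt (INR (S i))) by (apply sqrt_lt_R0; apply lt_0_INR; lia).
  simpl pow. field. split; lra.
Qed.

Lemma bfun_sq N i z : 0 < N -> 0 < z ->
  (b_fun N i z)^2 = N * exp (- z^2 + 2 * INR i * ln z - ln (INR (Factorial.fact i))).
Proof.
  intros HN Hz. rewrite bfun_exp by lra.
  pose proof (sqrt_fact_pos i). pose proof (INR_fact_lt_0 i).
  replace (- z^2 + 2 * INR i * ln z - ln (INR (Factorial.fact i))) with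
     ((- z^2/2 + INR i * ln z) + (- z^2/2 + INR i * ln z) + - ln (INR (Factorial.fact i))) by field.
  set (u := - z^2/2 + INR i * ln z).
  set (f := INR (Factorial.fact i)) in *.
  rewrite !exp_plus, exp_Ropp, exp_ln by lra.
  replace ((sqrt N / sqrt f * exp u) ^ 2)
    with ((sqrt N * sqrt N) / (sqrt f * sqrt f) * (exp u * exp u)) by (field; lra).
  rewrite !sqrt_sqrt by lra. field. lra.
Qed.

Lemma bfun_cmp N i x y : 0 < x -> 0 < y ->
  b_fun N i y = b_fun N i x * exp ((x^2 - y^2)/2 + INR i * (ln y - ln x)).
Proof.
  intros Hx Hy. rewrite !bfun_exp by lra. rewrite Rmult_assoc, <- exp_plus. f_equal. f_equal. field.
Qed.

Lemma cfun_eq N i z : 0 < z -> c_fun N i z = b_fun N i z * ((INR i - z^2)/z).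
Proof. intros Hz. unfold c_fun, b_fun. pose proof (sqrt_fact_pos i). field. lra. Qed.

Lemma exp_le (a b : R) : a <= b -> exp a <= exp b.
Proof. intros [H|H]; [left; apply exp_increasing; exact H| subst; lra]. Qed.

Lemma bsq_bounds N i z : 0 < N -> 0 < z -> (1 <= i)%nat ->
  N * exp ((INR i - z^2 - INR i * (ln (INR i) - 2 * ln z)) - 1 - ln (INR i) / 2) <= (b_fun N i z)^2 /\  (b_fun N i z)^2 <= N * exp (INR i - z^2 - INR i * (ln (INR i) - 2 * ln z)).
Proof.
  intros HN Hz Hi. rewrite bfun_sq by lra. destruct (stirling i Hi) as [S1 S2].
  split; apply Rmult_le_compat_l; try lra; apply exp_le; lra.
Qed.

Lemma phi_lower (a l : R) : 0 < a -> 0 < l ->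
  -(a - l)^2 / l <= a - l - a * (ln a - ln l).
Proof.
  intros Ha Hl.
  assert (E : ln a - ln l = ln (a / l)) by (unfold Rdiv; rewrite ln_mult, ln_Rinv; try lra; apply Rinv_0_lt_compat; lra).
  rewrite E. pose proof (ln_le_sub1 (a / l) ltac:(apply Rdiv_lt_0_compat; lra)) as H.
  assert (a * ln (a / l) <= a * (a / l - 1)) by (apply Rmult_le_compat_l; lra).
  replace (-(a - l)^2 / l) with (a - l - a * (a / l - 1)) by (field; lra). lra.
Qed.

Lemma phi_upper (a l : R) : 0 < l -> l <= a ->
  a - l - a * (ln a - ln l) <= -(a - l)^2 / (a + l).
Proof.
  intros Hl Hla.
  set (t := (a - l) / l).
  assert (Ht : 0 <= t) by (unfold t; apply Rle_div_r; lra).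
  assert (E : ln a - ln l = ln (1 + t)).
  { replace a with (l * (1 + t)) at 1 by (unfold t; field; lra). rewrite ln_mult by lra. ring. }
  rewrite E. pose proof (ln2_lower t Ht) as H.
  replace (2 * t / (2 + t)) with (2 * (a - l) / (a + l)) in H by (unfold t; field; lra).
  assert (a * (2 * (a - l) / (a + l)) <= a * ln (1 + t)) by (apply Rmult_le_compat_l; lra).
  replace (-(a - l)^2 / (a + l)) with (a - l - a * (2 * (a - l) / (a + l))) by (field; lra). lra.
Qed.


Definition ev (P : R -> Prop) := exists N0, forall N, N0 <= N -> P N.

Lemma ev_and (P Q : R -> Prop) : ev P -> ev Q -> ev (fun N => P N /\ Q N).
Proof.
  intros [a Ha] [b Hb]. exists (Rmax a b). intros N HN.
  split; [apply Ha | apply Hb]; eapply Rle_trans; try exact HN; [apply Rmax_l|apply Rmax_r].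
Qed.

Lemma ev_impl (P Q : R -> Prop) : (forall N, 1 <= N -> P N -> Q N) -> ev P -> ev Q.
Proof.
  intros H [a Ha]. exists (Rmax 1 a). intros N HN. apply H.
  - eapply Rle_trans; [apply Rmax_l| exact HN].
  - apply Ha. eapply Rle_trans; [apply Rmax_r| exact HN].
Qed.

Lemma ev_ge (a : R) : ev (fun N => a <= N).
Proof. exists a. auto. Qed.

Lemma Rpower_pos x y : 0 < Rpower x y.
Proof. apply exp_pos. Qed.

Lemma Rpower_ge1 x y : 1 <= x -> 0 <= y -> 1 <= Rpower x y.
Proof.
  intros Hx Hy. unfold Rpower. replace 1 with (exp 0) by apply exp_0. apply exp_le.
  assert (0 <= ln x) by (rewrite <- ln_1; destruct Hx as [Hx|Hx]; [left; apply ln_increasing; lra| rewrite Hx; lra]).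
  nra.
Qed.

Lemma ev_pow (K a b : R) : a < b -> ev (fun N => K * Rpower N a <= Rpower N b).
Proof.
  intros Hab.
  exists (Rmax 1 (Rpower (Rmax 1 K) (/ (b - a)))). intros N HN.
  assert (HN1 : 1 <= N) by (eapply Rle_trans; [apply Rmax_l| exact HN]).
  assert (HN2 : Rpower (Rmax 1 K) (/ (b - a)) <= N) by (eapply Rle_trans; [apply Rmax_r| exact HN]).
  replace b with (a + (b - a)) at 1 by ring. rewrite Rpower_plus.
  assert (Hk : Rmax 1 K <= Rpower N (b - a)).
  { replace (Rmax 1 K) with (Rpower (Rpower (Rmax 1 K) (/ (b - a))) (b - a)).
    - apply Rle_Rpower_l; [lra|]. split; [apply Rpower_pos| exact HN2].
    - rewrite Rpower_mult. replace (/ (b - a) * (b - a)) with 1 by (field; lra).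
      apply Rpower_1. pose proof (Rmax_l 1 K). lra. }
  pose proof (Rpower_pos N a). pose proof (Rmax_r 1 K). nra.
Qed.

Lemma ln_le_Rpower (N b : R) : 1 <= N -> 0 < b -> ln N <= Rpower N b / b.
Proof.
  intros HN Hb. apply Rle_div_r; [lra|].
  pose proof (ln_le_sub1 (Rpower N b) (Rpower_pos N b)) as H.
  unfold Rpower in H at 1. rewrite ln_exp in H. lra.
Qed.

Lemma ln_nonneg N : 1 <= N -> 0 <= ln N.
Proof. intros HN. rewrite <- ln_1. destruct HN as [H|H]; [left; apply ln_increasing; lra| rewrite H; lra]. Qed.

Lemma ev_ln (K b : R) : 0 < b -> ev (fun N => K * ln N <= Rpower N b).
Proof.
  intros Hb.
  apply (ev_impl (fun N => (Rabs K * 2 / b) * Rpower N (b/2) <= Rpower N b)).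
  2: { apply ev_pow. lra. }
  intros N HN H.
  pose proof (ln_le_Rpower N (b/2) HN ltac:(lra)) as Hl.
  pose proof (ln_nonneg N HN).
  assert (A1 : K * ln N <= Rabs K * ln N) by (apply Rmult_le_compat_r; [lra| apply Rle_abs]).
  assert (A2 : Rabs K * ln N <= Rabs K * (Rpower N (b / 2) / (b / 2))) by (apply Rmult_le_compat_l; [apply Rabs_pos| lra]).
  replace (Rabs K * (Rpower N (b / 2) / (b / 2))) with (Rabs K * 2 / b * Rpower N (b / 2)) in A2 by (field; lra).
  lra.
Qed.

Lemma ev_exp (K m k c t : R) : 0 < c -> 0 < k -> 0 < t ->
  ev (fun N => K * Rpower N m * exp (- (k * Rpower N c)) <= t).
Proof.
  intros Hc Hk Ht.
  apply (ev_impl (fun N => (2 * Rabs m / k) * ln N <= Rpower N c /\ (2 / k * Rabs (ln (Rabs K / t + 1))) * Rpower N 0 <= Rpower N c)).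
  2: { apply ev_and; [apply ev_ln; lra| apply ev_pow; lra]. }
  intros N HN [H1 H2].
  rewrite Rpower_O in H2 by lra.
  pose proof (ln_nonneg N HN) as Hln.
  assert (Hm : m * ln N <= Rabs m * ln N) by (apply Rmult_le_compat_r; [lra|apply Rle_abs]).
  assert (H1' : Rabs m * ln N <= k/2 * Rpower N c).
  { replace (Rabs m * ln N) with (k/2 * (2 * Rabs m / k * ln N)) by (field; lra).
    apply Rmult_le_compat_l; lra. }
  assert (Hexp : Rpower N m * exp (- (k * Rpower N c)) <= exp (- (k/2 * Rpower N c))).
  { unfold Rpower at 1. rewrite <- exp_plus. apply exp_le. lra. }
  assert (HK : Rabs K / t + 1 <= exp (k/2 * Rpower N c)).
  { rewrite <- (exp_ln (Rabs K / t + 1)).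
    2: { pose proof (Rabs_pos K). assert (0 <= Rabs K / t) by (apply Rmult_le_pos; [lra| left; apply Rinv_0_lt_compat; lra]). lra. }
    apply exp_le. pose proof (Rle_abs (ln (Rabs K / t + 1))).
    set (L := Rabs (ln (Rabs K / t + 1))) in *.
    assert (EL : L = k/2 * (2 / k * L)) by (field; lra).
    assert (k/2 * (2 / k * L) <= k/2 * Rpower N c) by (apply Rmult_le_compat_l; lra).
    lra. }
  assert (Hpos : 0 <= Rpower N m * exp (- (k * Rpower N c))) by (pose proof (Rpower_pos N m); pose proof (exp_pos (- (k * Rpower N c))); nra).
  assert (HKa : K * (Rpower N m * exp (- (k * Rpower N c))) <= Rabs K * exp (- (k/2 * Rpower N c))).
  { eapply Rle_trans; [apply Rmult_le_compat_r; [exact Hpos| apply Rle_abs]|].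
    apply Rmult_le_compat_l; [apply Rabs_pos| exact Hexp]. }
  assert (Hfin : Rabs K * exp (- (k/2 * Rpower N c)) <= t).
  { rewrite exp_Ropp. pose proof (exp_pos (k/2 * Rpower N c)).
    apply Rle_div_l; [lra|].
    assert (Rabs K <= t * (Rabs K / t + 1) - t) by (field_simplify; lra).
    assert (t * (Rabs K / t + 1) <= t * exp (k / 2 * Rpower N c)) by (apply Rmult_le_compat_l; lra).
    lra. }
  lra.
Qed.

Lemma nat_floor (r : R) : 0 <= r -> exists k : nat, INR k <= r < INR k + 1.
Proof.
  intros Hr. destruct (base_Int_part r) as [H1 H2].
  assert (Hz : (0 <= Int_part r)%Z).
  { assert (-1 < IZR (Int_part r)) by lra. apply lt_IZR in H. lia. }
  exists (Z.to_nat (Int_part r)). rewrite INR_IZR_INZ, Z2Nat.id by lia. lra.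
Qed.

Lemma nat_ceil (r : R) : 0 <= r -> exists k : nat, r <= INR k < r + 1.
Proof.
  intros Hr. destruct (nat_floor r Hr) as [k Hk].
  destruct (Req_dec (INR k) r) as [E|E].
  - exists k. lra.
  - exists (S k). rewrite S_INR. lra.
Qed.

Lemma sq_le_to_le (a b : R) : 0 <= b -> a^2 <= b^2 -> a <= b.
Proof. intros Hb H. destruct (Rle_dec a b) as [|Hn]; auto. apply Rnot_le_lt in Hn. nra. Qed.

Lemma sq_lt_to_lt (a b : R) : 0 <= a -> 0 <= b -> a^2 < b^2 -> a < b.
Proof. intros Ha Hb H. destruct (Rlt_dec a b) as [|Hn]; auto. apply Rnot_lt_le in Hn. nra. Qed.

Lemma ln_sq z : 0 < z -> ln (z^2) = 2 * ln z.
Proof. intros Hz. replace (z^2) with (z*z) by ring. rewrite ln_mult by lra. ring. Qed.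

Lemma window (N z Sw tau eta P1 P2 r c2 A : R) (n : nat) (v : nat -> R) :
  1 <= N -> 1 <= Sw -> 8 * Sw <= z -> 0 < c2 -> z + 1 <= (c2 + 1) * N -> 0 < r ->
  r^2/2 <= P1^2 + P2^2 -> P1^2 + P2^2 <= Rpower N A ->
  0 < tau -> tau <= 1/8 -> tau <= r / (exp 1 * sqrt (2 * (c2 + 1))) ->
  N * Rpower N A * 9 * Sw^2 * exp (- (Sw^2 / 12)) < tau^2 ->
  z^2 + z * Sw <= INR n ->
  0 <= eta -> eta <= r/2 -> eta^2 * Sw^4 <= r^2 * tau^2 / 2048 ->
  (forall i : nat, z^2 <= INR i <= z^2 + z*Sw ->
     Rabs (v i - b_fun N i z * (P1 + P2 * ((INR i - z^2)/z))) <= b_fun N i z * eta) ->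
  z / (8 * Sw) * (tau^2 / (8192 * Sw^4 * (2+Sw)^2)) <= sum1 n (fun i => distZ (v i) ^ 2).
Proof.
  intros HN HS Hz Hc2 Hzc Hr HQ1 HQ2 Ht0 Ht8 Ht HFb' Hn He0 He1 He2 Hv.
  assert (Hz0 : 0 < z) by lra.
  set (Q := P1^2 + P2^2) in *.
  assert (HQ : 0 < Q) by nra.
  set (p := sqrt Q).
  assert (Hpp : p * p = Q) by (apply sqrt_sqrt; lra).
  assert (Hp0 : 0 < p) by (apply sqrt_lt_R0; lra).
  assert (Hlam : 64 <= z^2) by nra.
  destruct (nat_ceil (z^2) ltac:(lra)) as [ia Hia].
  destruct (nat_floor (z^2 + z*Sw) ltac:(nra)) as [ib Hib].
  assert (HzS : 8 <= z * Sw) by nra.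
  assert (Hiab : (ia < ib)%nat) by (apply INR_lt; lra).
  assert (Hia1 : (1 <= ia)%nat) by (apply INR_le; simpl; lra).
  assert (Hib1 : (1 <= ib)%nat) by lia.
  assert (Hibn : (ib <= n)%nat) by (apply INR_le; lra).
  assert (HFa : 2 * tau <= b_fun N ia z * p * (2 + Sw)).
  { destruct (bsq_bounds N ia z ltac:(lra) Hz0 Hia1) as [Hlo _].
    set (a := INR ia) in *.
    rewrite <- ln_sq in Hlo by lra.
    pose proof (phi_lower a (z^2) ltac:(lra) ltac:(lra)) as Hphi.
    assert (Hd : (a - z^2)^2 / z^2 <= 1).
    { apply Rle_div_l; [lra|]. nra. }
    assert (Hlo2 : N * exp (-2 - ln a / 2) <= b_fun N ia z ^ 2).
    { eapply Rle_trans; [|exact Hlo]. apply Rmult_le_compat_l; [lra|]. apply exp_le.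
      assert (-(a - z^2)^2 / z^2 = - ((a - z^2)^2 / z^2)) by (field; lra). lra. }
    assert (Hsq : exp (- (ln a / 2)) = / sqrt a).
    { rewrite exp_Ropp. f_equal. rewrite <- Rpower_sqrt by lra. unfold Rpower. f_equal. field. }
    assert (Hsa : sqrt a <= z + 1).
    { rewrite <- (sqrt_pow2 (z+1)) by lra. apply sqrt_le_1_alt. nra. }
    assert (Hsa0 : 0 < sqrt a) by (apply sqrt_lt_R0; lra).
    replace (-2 - ln a / 2) with (-2 + - (ln a / 2)) in Hlo2 by ring.
    rewrite exp_plus, Hsq in Hlo2.
    assert (He2' : exp (-2) = / (exp 1)^2).
    { replace (-2) with (- (1 + 1)) by ring. rewrite exp_Ropp, exp_plus. simpl. field. apply exp_neq_0. }
    rewrite He2' in Hlo2.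
    set (e := exp 1) in *.
    assert (He : 0 < e) by apply exp_pos.
    assert (Hg2 : / e^2 / (c2 + 1) <= b_fun N ia z ^ 2).
    { eapply Rle_trans; [|exact Hlo2].
      replace (N * (/ e ^ 2 * / sqrt a)) with (/ e^2 * (N / sqrt a)) by (field; lra).
      replace (/ e^2 / (c2 + 1)) with (/ e^2 * (1 / (c2 + 1))) by (field; lra).
      apply Rmult_le_compat_l; [left; apply Rinv_0_lt_compat; nra|].
      apply (proj1 (Rle_div_r (1/(c2+1)) N (sqrt a) Hsa0)).
      replace (1 / (c2 + 1) * sqrt a) with (sqrt a / (c2 + 1)) by (field; lra).
      apply Rle_div_l; lra. }
    set (g := b_fun N ia z) in *.
    assert (Hg0 : 0 < g) by (apply bfun_pos; lra).
    set (s := sqrt (2 * (c2 + 1))) in *.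
    assert (Hs : s * s = 2 * (c2 + 1)) by (apply sqrt_sqrt; lra).
    assert (Hs0 : 0 < s) by (apply sqrt_lt_R0; lra).
    assert (Ht2 : tau^2 <= (r / (e * s))^2) by (apply pow_incr; lra).
    assert (Hgp : tau <= g * p).
    { apply sq_le_to_le; [nra|].
      eapply Rle_trans; [exact Ht2|].
      replace ((r / (e * s))^2) with (/ e^2 / (c2 + 1) * (r^2 / 2)) by (field_simplify; [rewrite <- ?Rsqr_pow2; unfold Rsqr; rewrite ?Hs|..]; try field; nra).
      replace ((g * p)^2) with (g^2 * Q) by (rewrite <- Hpp; ring).
      apply Rmult_le_compat; try lra. left; apply Rdiv_lt_0_compat; [apply Rinv_0_lt_compat; nra| lra]. nra. }
    assert (0 <= g * p) by nra. nra. }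
  assert (HFb : b_fun N ib z * p * (2 + Sw) < tau).
  { destruct (bsq_bounds N ib z ltac:(lra) Hz0 Hib1) as [_ Hup].
    set (b := INR ib) in *.
    rewrite <- ln_sq in Hup by lra.
    pose proof (phi_upper b (z^2) ltac:(lra) ltac:(lra)) as Hphi.
    assert (Hq : Sw^2 / 12 <= (b - z^2)^2 / (b + z^2)).
    { apply (proj1 (Rle_div_r _ _ (b + z^2) ltac:(lra))).
      assert (b - z^2 >= z * Sw / 2) by lra.
      assert (b + z^2 <= 3 * z^2) by nra.
      assert ((z * Sw / 2)^2 <= (b - z^2)^2) by (apply pow_incr; nra).
      assert (Sw^2 / 12 * (b + z^2) <= Sw^2/12 * (3 * z^2)) by (apply Rmult_le_compat_l; nra).
      lra. }
    assert (Hg2 : b_fun N ib z ^ 2 <= N * exp (- (Sw^2/12))).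
    { eapply Rle_trans; [exact Hup|]. apply Rmult_le_compat_l; [lra|]. apply exp_le.
      assert (- (b - z ^ 2) ^ 2 / (b + z ^ 2) = - ((b - z ^ 2) ^ 2 / (b + z ^ 2))) by (field; lra). lra. }
    set (g := b_fun N ib z) in *.
    assert (Hg0 : 0 < g) by (apply bfun_pos; lra).
    apply sq_lt_to_lt; [apply Rmult_le_pos; nra| lra|].
    replace ((g * p * (2 + Sw))^2) with (g^2 * Q * (2 + Sw)^2) by (rewrite <- Hpp; ring).
    assert ((2 + Sw)^2 <= 9 * Sw^2) by nra.
    assert (HE : 0 < exp (- (Sw^2/12))) by apply exp_pos.
    assert (g^2 * Q <= N * exp (- (Sw^2/12)) * Rpower N A) by (apply Rmult_le_compat; nra).
    assert (g^2 * Q * (2 + Sw)^2 <= N * exp (- (Sw^2/12)) * Rpower N A * (9 * Sw^2)).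
    { apply Rmult_le_compat; try nra. }
    lra. }
  destruct (core z Sw tau eta P1 P2 ia ib (fun i => b_fun N i z) v HS Hz
             (fun i => bfun_pos N i z ltac:(lra) Hz0) (fun i => bfun_ratio N i z Hz0)
             ltac:(lra) ltac:(lra) ltac:(lia) HQ Ht0 Ht8 HFa HFb He0) as [j [q [Hj [Hjq [Hq Hsum]]]]].
  - assert (r / 2 <= p).
    { apply sq_le_to_le; [lra|]. replace (p^2) with Q by (rewrite <- Hpp; ring). nra. }
    change (eta <= p). lra.
  - assert (Hs4 : 0 < Sw^4) by (apply pow_lt; lra).
    change (eta^2 <= Q * tau ^ 2 / (1024 * Sw ^ 4)).
    apply (proj1 (Rle_div_r _ _ (1024 * Sw^4) ltac:(lra))).
    assert (r^2 * tau^2 / 2048 <= Q * tau^2 / 1024).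
    { replace (r^2*tau^2/2048) with ((r^2/2) * tau^2 / 1024) by field. unfold Rdiv.
      apply Rmult_le_compat_r; [lra|]. apply Rmult_le_compat_r; [nra|lra]. }
    lra.
  - intros i Hi. apply Hv. destruct Hi as [Hi1 Hi2]. apply le_INR in Hi1. apply le_INR in Hi2. lra.
  - eapply Rle_trans; [|apply (sum1_ge_rsum n j (q+q))].
    + eapply Rle_trans; [|exact Hsum]. apply Rmult_le_compat_r; [|exact Hq].
      apply Rle_div_r; [apply Rmult_lt_0_compat; [apply Rmult_lt_0_compat; [lra| apply pow_lt; lra]| nra]|]. nra.
    + intros i. apply pow2_ge_0.
    + lia.
    + lia.
Qed.

Lemma ln_diff_le (x y : R) : 0 < x -> 0 < y -> ln y - ln x <= y / x - 1.
Proof.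
  intros Hx Hy. replace (ln y - ln x) with (ln (y / x)).
  - apply ln_le_sub1. apply Rdiv_lt_0_compat; lra.
  - unfold Rdiv. rewrite ln_mult, ln_Rinv; try lra. apply Rinv_0_lt_compat; lra.
Qed.

Lemma comb_bound (D3 D4 s B : R) : D3^2 + D4^2 <= B^2 -> 0 <= B ->
  Rabs (D3 + D4 * s) <= B * (1 + Rabs s).
Proof.
  intros H HB.
  assert (H3 : Rabs D3 <= B) by (apply sq_le_to_le; [lra|]; rewrite pow2_abs; pose proof (pow2_ge_0 D4); lra).
  assert (H4 : Rabs D4 <= B) by (apply sq_le_to_le; [lra|]; rewrite pow2_abs; pose proof (pow2_ge_0 D3); lra).
  eapply Rle_trans; [apply Rabs_triang|]. rewrite Rabs_mult.
  assert (Rabs D4 * Rabs s <= B * Rabs s) by (apply Rmult_le_compat_r; [apply Rabs_pos|lra]).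
  lra.
Qed.

Definition vfun (N x y D1 D2 D3 D4 : R) (i : nat) : R :=
  D1 * b_fun N i x + D2 * c_fun N i x + D3 * b_fun N i y + D4 * c_fun N i y.

Lemma pert_x (N x y Sw B D1 D2 D3 D4 : R) (i : nat) :
  0 < N -> 0 < x -> x < y -> 0 <= Sw -> 4 * Sw <= y - x -> 0 <= B ->
  D3^2 + D4^2 <= B^2 ->
  x^2 <= INR i <= x^2 + x * Sw ->
  Rabs (vfun N x y D1 D2 D3 D4 i - b_fun N i x * (D1 + D2 * ((INR i - x^2)/x)))
    <= b_fun N i x * (B * (1 + y) * exp (- ((y - x)^2 / 4))).
Proof.
  intros HN Hx Hxy HS HSxy HB HD Hi.
  unfold vfun. rewrite !cfun_eq by lra.
  replace (D1 * b_fun N i x + D2 * (b_fun N i x * ((INR i - x ^ 2) / x)) + D3 * b_fun N i y +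
     D4 * (b_fun N i y * ((INR i - y ^ 2) / y)) - b_fun N i x * (D1 + D2 * ((INR i - x ^ 2) / x)))
    with (b_fun N i y * (D3 + D4 * ((INR i - y^2)/y))) by ring.
  rewrite Rabs_mult. rewrite (Rabs_pos_eq (b_fun N i y)) by (left; apply bfun_pos; lra).
  assert (Hiy : INR i <= y^2) by nra.
  assert (Hs : Rabs ((INR i - y^2)/y) <= y).
  { rewrite Rabs_left1.
    - apply Rle_trans with ((y^2 - INR i)/y); [right; field; lra|]. apply Rle_div_l; [lra|].
      pose proof (pos_INR i). nra.
    - apply Rle_div_l; [lra|]. lra. }
  pose proof (comb_bound D3 D4 ((INR i - y^2)/y) B HD HB) as Hc.
  rewrite (bfun_cmp N i x y) by lra.
  set (E := (x ^ 2 - y ^ 2) / 2 + INR i * (ln y - ln x)).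
  assert (HE : E <= - ((y - x)^2 / 4)).
  { unfold E. pose proof (ln_diff_le x y Hx ltac:(lra)) as Hl.
    assert (Hl0 : 0 <= ln y - ln x) by (pose proof (ln_increasing x y Hx Hxy); lra).
    assert (INR i * (ln y - ln x) <= (x^2 + x * Sw) * (y / x - 1)).
    { apply Rmult_le_compat; try lra. apply pos_INR. }
    replace ((x^2 + x * Sw) * (y / x - 1)) with ((x + Sw) * (y - x)) in H by (field; lra).
    nra. }
  pose proof (bfun_pos N i x HN Hx) as Hb.
  assert (exp E <= exp (- ((y - x)^2 / 4))) by (apply exp_le; lra).
  assert (Hc' : B * (1 + Rabs ((INR i - y ^ 2) / y)) <= B * (1 + y)) by (apply Rmult_le_compat_l; lra).
  pose proof (exp_pos E).
  assert (Habs : 0 <= Rabs (D3 + D4 * ((INR i - y ^ 2) / y))) by apply Rabs_pos.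
  replace (b_fun N i x * (B * (1 + y) * exp (- ((y - x) ^ 2 / 4)))) with
    ((b_fun N i x) * (exp (- ((y - x) ^ 2 / 4)) * (B * (1 + y)))) by ring.
  rewrite Rmult_assoc. apply Rmult_le_compat_l; [lra|].
  apply Rmult_le_compat; try lra.
Qed.

Lemma pert_y (N x y Sw B D1 D2 D3 D4 : R) (i : nat) :
  0 < N -> 0 < x -> x < y -> 0 <= Sw -> 0 <= B ->
  D1^2 + D2^2 <= B^2 ->
  y^2 <= INR i <= y^2 + y * Sw ->
  Rabs (vfun N x y D1 D2 D3 D4 i - b_fun N i y * (D3 + D4 * ((INR i - y^2)/y)))
    <= b_fun N i y * (B * (1 + (y^2 + y * Sw)/x) * exp (- ((y - x)^2 / 4))).
Proof.
  intros HN Hx Hxy HS HB HD Hi.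
  unfold vfun. rewrite !cfun_eq by lra.
  replace (D1 * b_fun N i x + D2 * (b_fun N i x * ((INR i - x ^ 2) / x)) + D3 * b_fun N i y +
     D4 * (b_fun N i y * ((INR i - y ^ 2) / y)) - b_fun N i y * (D3 + D4 * ((INR i - y ^ 2) / y)))
    with (b_fun N i x * (D1 + D2 * ((INR i - x^2)/x))) by ring.
  rewrite Rabs_mult. rewrite (Rabs_pos_eq (b_fun N i x)) by (left; apply bfun_pos; lra).
  assert (Hs : Rabs ((INR i - x^2)/x) <= (y^2 + y * Sw)/x).
  { rewrite Rabs_pos_eq.
    - apply Rle_div_l; [lra|]. replace ((y ^ 2 + y * Sw) / x * x) with (y^2 + y*Sw) by (field; lra). nra.
    - apply Rle_div_r; [lra|]. nra. }
  pose proof (comb_bound D1 D2 ((INR i - x^2)/x) B HD HB) as Hc.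
  rewrite (bfun_cmp N i y x) by lra.
  set (E := (y ^ 2 - x ^ 2) / 2 + INR i * (ln x - ln y)).
  assert (HE : E <= - ((y - x)^2 / 4)).
  { unfold E. pose proof (ln_diff_le y x ltac:(lra) Hx) as Hl.
    assert (Hl0 : ln x - ln y <= 0) by (pose proof (ln_increasing x y Hx Hxy); lra).
    assert (INR i * (ln x - ln y) <= y^2 * (ln x - ln y)) by nra.
    assert (y^2 * (ln x - ln y) <= y^2 * (x / y - 1)) by (apply Rmult_le_compat_l; nra).
    replace (y^2 * (x / y - 1)) with (y * (x - y)) in H0 by (field; lra).
    nra. }
  pose proof (bfun_pos N i y HN ltac:(lra)) as Hb.
  assert (exp E <= exp (- ((y - x)^2 / 4))) by (apply exp_le; lra).
  assert (Hc' : B * (1 + Rabs ((INR i - x ^ 2) / x)) <= B * (1 + (y ^ 2 + y * Sw) / x)) by (apply Rmult_le_compat_l; lra).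
  pose proof (exp_pos E).
  assert (Habs : 0 <= Rabs (D1 + D2 * ((INR i - x ^ 2) / x))) by apply Rabs_pos.
  replace (b_fun N i y * (B * (1 + (y ^ 2 + y * Sw) / x) * exp (- ((y - x) ^ 2 / 4)))) with
    ((b_fun N i y) * (exp (- ((y - x) ^ 2 / 4)) * (B * (1 + (y ^ 2 + y * Sw) / x)))) by ring.
  rewrite Rmult_assoc. apply Rmult_le_compat_l; [lra|].
  apply Rmult_le_compat; try lra.
Qed.

Lemma rp_pow (M a : R) (k : nat) : 0 < M -> (Rpower M a)^k = Rpower M (a * INR k).
Proof. intros HM. rewrite <- Rpower_pow by apply Rpower_pos. apply Rpower_mult. Qed.

Lemma rp_sq (M a : R) : 0 < M -> (Rpower M a)^2 = Rpower M (2 * a).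
Proof. intros HM. rewrite rp_pow by lra. f_equal. simpl. ring. Qed.

Lemma rp_mul (M a b : R) : Rpower M a * Rpower M b = Rpower M (a + b).
Proof. rewrite Rpower_plus. reflexivity. Qed.

Theorem theorem3p17 (c1 c2 A C eps_g r : R) :
  0 < c1 -> c1 < c2 -> 0 < A -> 0 < C -> 0 < eps_g -> eps_g < 1 / 2 -> 0 < r ->
  exists N0 : R, forall (n : nat) (M : R),
    N0 <= M ->
    c2 * M <= sqrt (INR n) - M ->
    let N := M in
    forall x y : R,
      c1 * M <= x -> x < y -> y <= c2 * M ->
      Rpower N eps_g <= Rabs (x - y) ->
      ~ (exists D1 D2 D3 D4 : R,
            r ^ 2 <= D1 ^ 2 + D2 ^ 2 + D3 ^ 2 + D4 ^ 2 <= Rpower N A /\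
            sum1 n (fun i => (distZ (D1 * b_fun N i x + D2 * c_fun N i x
                                     + D3 * b_fun N i y + D4 * c_fun N i y)) ^ 2)
              <= C * ln N).
Proof.
  intros Hc1 Hc12 HA HC He He2 Hr.
  set (th := eps_g / 8).
  set (tau := Rmin (1/8) (r / (exp 1 * sqrt (2 * (c2 + 1))))).
  assert (Hden : 0 < exp 1 * sqrt (2 * (c2 + 1))) by (apply Rmult_lt_0_compat; [apply exp_pos| apply sqrt_lt_R0; lra]).
  assert (Ht0 : 0 < tau) by (unfold tau; apply Rmin_glb_lt; [lra| apply Rdiv_lt_0_compat; lra]).
  assert (Ht8 : tau <= 1/8) by apply Rmin_l.
  assert (Htr : tau <= r / (exp 1 * sqrt (2 * (c2 + 1)))) by apply Rmin_r.
  set (K1 := c2 + 2 * c2^2 / c1).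
  assert (HK1 : c2 <= K1) by (unfold K1; assert (0 <= 2 * c2^2 / c1) by (apply Rle_div_r; nra); lra).
  set (t0 := Rmin (r/2) (r * tau / 64)).
  assert (Ht00 : 0 < t0) by (unfold t0; apply Rmin_glb_lt; nra).
  set (K6 := 2 * 589824 * C / (c1 * tau^2)).
  destruct (ev_and _ _ (ev_ge 1)
           (ev_and _ _ (ev_pow (8 / c1) th 1 ltac:(unfold th; lra))
           (ev_and _ _ (ev_pow 4 th eps_g ltac:(unfold th; lra))
           (ev_and _ _ (ev_pow 1 th 1 ltac:(unfold th; lra))
           (ev_and _ _ (ev_exp 9 (1 + A + 2 * th) (1/12) (2 * th) (tau^2/2) ltac:(unfold th; lra) ltac:(lra) ltac:(nra))
           (ev_and _ _ (ev_exp (1 + K1) (A/2 + 1 + 2 * th) (1/4) (2 * eps_g) t0 ltac:(lra) ltac:(lra) Ht00)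
                        (ev_ln K6 (1 - 7 * th) ltac:(unfold th; lra))))))))
    as [N0 HN0].
  exists N0. intros n M HM Hn. cbv zeta. intros x y Hx Hxy Hy Hd [D1 [D2 [D3 [D4 [[HD1 HD2] Hsum]]]]].
  destruct (HN0 M HM) as [E7 [E1 [E2 [E3 [E4 [E5 E6]]]]]].
  assert (HM0 : 0 < M) by lra.
  rewrite Rpower_1 in E1, E3 by lra.
  set (Sw := Rpower M th) in *.
  assert (HS1 : 1 <= Sw) by (apply Rpower_ge1; unfold th; lra).
  assert (HSw2 : Sw^2 = Rpower M (2 * th)) by (apply rp_sq; lra).
  assert (H8S : 8 * Sw <= c1 * M).
  { replace (8 / c1 * Sw) with ((8 * Sw) / c1) in E1 by (field; lra). apply Rle_div_l in E1; lra. }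
  rewrite Rabs_minus_sym, Rabs_pos_eq in Hd by lra.
  assert (Hx0 : 0 < x) by nra.
  set (B := Rpower M (A/2)).
  assert (HB0 : 0 <= B) by (left; apply Rpower_pos).
  assert (HB2 : B^2 = Rpower M A) by (unfold B; rewrite rp_sq by lra; f_equal; field).
  set (eta := B * (1 + K1 * M) * exp (- (Rpower M (2 * eps_g) / 4))).
  assert (Heta0 : 0 <= eta).
  { unfold eta. apply Rmult_le_pos; [apply Rmult_le_pos; [lra| nra]| left; apply exp_pos]. }
  assert (HetaS : eta * Sw^2 <= t0).
  { eapply Rle_trans; [|exact E5].
    unfold eta. rewrite HSw2.
    replace (- (Rpower M (2 * eps_g) / 4)) with (- (1/4 * Rpower M (2 * eps_g))) by field.
    replace (Rpower M (A / 2 + 1 + 2 * th)) with (B * M * Rpower M (2 * th)).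
    2: { unfold B. rewrite <- (Rpower_1 M) at 2 by lra. rewrite !rp_mul. reflexivity. }
    pose proof (exp_pos (- (1 / 4 * Rpower M (2 * eps_g)))). pose proof (Rpower_pos M (2 * th)).
    assert (H1 : B * (1 + K1 * M) <= (1 + K1) * (B * M)) by nra.
    assert (B*(1+K1*M) * (exp (- (1 / 4 * Rpower M (2 * eps_g))) * Rpower M (2 * th)) <= (1+K1)*(B*M) * (exp (- (1 / 4 * Rpower M (2 * eps_g))) * Rpower M (2 * th))) by (apply Rmult_le_compat_r; [apply Rmult_le_pos; lra| exact H1]).
    lra. }
  assert (Heta1 : eta <= r / 2).
  { assert (1 <= Sw^2) by nra.
    assert (eta * 1 <= eta * Sw^2) by (apply Rmult_le_compat_l; lra). assert (t0 <= r/2) by apply Rmin_l. lra. }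
  assert (Heta2 : eta^2 * Sw^4 <= r^2 * tau^2 / 2048).
  { replace (eta^2 * Sw^4) with ((eta * Sw^2)^2) by ring.
    assert (H : t0 <= r * tau / 64) by apply Rmin_r.
    assert ((eta * Sw^2)^2 <= (r * tau / 64)^2) by (apply pow_incr; nra).
    nra. }
  assert (HFb : M * Rpower M A * 9 * Sw^2 * exp (- (Sw^2/12)) < tau^2).
  { rewrite HSw2. replace (- (Rpower M (2 * th) / 12)) with (- (1/12 * Rpower M (2 * th))) by field.
    replace (M * Rpower M A * 9 * Rpower M (2 * th)) with (9 * Rpower M (1 + A + 2 * th)).
    2: { rewrite <- !rp_mul, Rpower_1 by lra. ring. }
    nra. }
  assert (Hexp : exp (- ((y - x)^2 / 4)) <= exp (- (Rpower M (2 * eps_g) / 4))).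
  { apply exp_le. rewrite <- rp_sq by lra.
    assert (Rpower M eps_g ^ 2 <= (y - x)^2) by (apply pow_incr; split; [left; apply Rpower_pos| lra]). lra. }
  assert (Hsq : Sw <= M) by lra.
  assert (Hnn : forall z, 0 <= z -> z <= c2 * M -> z^2 + z * Sw <= INR n).
  { intros z Hz0 Hz. assert (z + Sw <= sqrt (INR n)) by lra.
    assert ((z + Sw)^2 <= (sqrt (INR n))^2) by (apply pow_incr; lra).
    rewrite pow2_sqrt in H0 by apply pos_INR. nra. }
  assert (Hwin : exists z P1 P2, c1 * M <= z <= c2 * M /\ r^2/2 <= P1^2 + P2^2 /\ P1^2 + P2^2 <= Rpower M A /\
      forall i : nat, z^2 <= INR i <= z^2 + z*Sw ->
        Rabs (vfun M x y D1 D2 D3 D4 i - b_fun M i z * (P1 + P2 * ((INR i - z^2)/z))) <= b_fun M i z * eta).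
  { destruct (Rle_dec (r^2/2) (D1^2 + D2^2)) as [Hcase|Hcase].
    - exists x, D1, D2. split; [lra|]. split; [exact Hcase|]. split; [pose proof (pow2_ge_0 D3); pose proof (pow2_ge_0 D4); lra|].
      intros i Hi. eapply Rle_trans; [apply (pert_x M x y Sw B D1 D2 D3 D4 i); try lra|].
      + pose proof (pow2_ge_0 D1); pose proof (pow2_ge_0 D2); lra.
      + apply Rmult_le_compat_l; [left; apply bfun_pos; lra|].
        unfold eta. apply Rmult_le_compat; try lra.
        * apply Rmult_le_pos; lra.
        * left; apply exp_pos.
        * apply Rmult_le_compat_l; nra.
    - exists y, D3, D4. split; [lra|]. split; [pose proof (pow2_ge_0 D1); pose proof (pow2_ge_0 D2); lra|].
      split; [pose proof (pow2_ge_0 D1); pose proof (pow2_ge_0 D2); lra|].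
      intros i Hi. eapply Rle_trans; [apply (pert_y M x y Sw B D1 D2 D3 D4 i); try lra|].
      + pose proof (pow2_ge_0 D3); pose proof (pow2_ge_0 D4); lra.
      + apply Rmult_le_compat_l; [left; apply bfun_pos; lra|].
        unfold eta. apply Rmult_le_compat; try lra.
        * apply Rmult_le_pos; [lra|]. assert (0 <= (y^2 + y * Sw)/x) by (apply Rle_div_r; nra). lra.
        * left; apply exp_pos.
        * apply Rmult_le_compat_l; [lra|].
          assert ((y^2 + y * Sw)/x <= K1 * M).
          { apply Rle_div_l; [lra|].
            assert (y^2 + y * Sw <= 2 * c2^2 * M^2) by nra.
            assert (2 * c2^2 / c1 * M * x >= 2 * c2^2 * M^2).
            { replace (2 * c2^2 / c1 * M * x) with (2 * c2^2 * M * (x / c1)) by (field; lra).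
              assert (M <= x / c1) by (apply Rle_div_r; lra).
              assert (0 <= 2 * c2^2 * M) by nra. nra. }
            assert (c2 * M * x >= 0) by nra.
            unfold K1. nra. }
          lra. }
  destruct Hwin as [z [P1 [P2 [Hz [HP1 [HP2 Hv]]]]]].
  assert (Hzw := window M z Sw tau eta P1 P2 r c2 A n (vfun M x y D1 D2 D3 D4)
     E7 HS1 ltac:(lra) ltac:(lra) ltac:(lra) Hr HP1 HP2 Ht0 Ht8 Htr HFb
     (Hnn z ltac:(nra) ltac:(lra)) Heta0 Heta1 Heta2 Hv).
  unfold vfun in Hzw.
  set (W := Rpower M (1 - 7 * th)) in *.
  assert (HW0 : 0 < W) by apply Rpower_pos.
  assert (HMW : M = W * Sw^7).
  { unfold W, Sw. rewrite rp_pow by lra. rewrite rp_mul. replace (1 - 7 * th + th * INR 7) with 1 by (simpl; ring).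
    rewrite Rpower_1 by lra. reflexivity. }
  assert (Hlow : c1 * tau^2 * W / 589824 <= z / (8 * Sw) * (tau ^ 2 / (8192 * Sw ^ 4 * (2 + Sw) ^ 2))).
  { assert (HS0 : 0 < Sw) by lra.
    replace (z / (8 * Sw) * (tau ^ 2 / (8192 * Sw ^ 4 * (2 + Sw) ^ 2))) with (z * tau^2 / (65536 * Sw^5 * (2 + Sw)^2)) by (field; lra).
    assert (Hpos : 0 < 65536 * Sw^5 * (2 + Sw)^2) by (apply Rmult_lt_0_compat; [apply Rmult_lt_0_compat; [lra| apply pow_lt; lra]| nra]).
    apply (proj1 (Rle_div_r _ _ _ Hpos)).
    assert (Hz' : c1 * (W * Sw^7) <= z) by (rewrite <- HMW; lra).
    assert (H9 : (2 + Sw)^2 <= 9 * Sw^2) by nra.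
    assert (HWs : 0 < W * Sw^5) by (apply Rmult_lt_0_compat; [lra| apply pow_lt; lra]).
    replace (c1 * tau ^ 2 * W / 589824 * (65536 * Sw ^ 5 * (2 + Sw) ^ 2))
       with (c1 * tau^2 * (W * Sw^5) * (2 + Sw)^2 / 9) by field.
    assert (c1 * tau ^ 2 * (W * Sw ^ 5) * (2 + Sw) ^ 2 / 9 <= c1 * tau ^ 2 * (W * Sw ^ 5) * Sw^2).
    { apply Rle_div_l; [lra|]. assert (0 < c1 * tau^2 * (W * Sw^5)) by (apply Rmult_lt_0_compat; nra). nra. }
    assert (c1 * tau ^ 2 * (W * Sw ^ 5) * Sw^2 <= z * tau^2).
    { replace (c1 * tau ^ 2 * (W * Sw ^ 5) * Sw^2) with ((c1 * (W * Sw^7)) * tau^2) by ring.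
      apply Rmult_le_compat_r; nra. }
    lra. }
  assert (Hln : C * ln M < c1 * tau^2 * W / 589824).
  { unfold K6 in E6.
    replace (2 * 589824 * C / (c1 * tau ^ 2) * ln M) with (C * ln M / (c1 * tau^2 / (2 * 589824))) in E6 by (field; nra).
    apply Rle_div_l in E6; [|nra].
    assert (W * (c1 * tau ^ 2 / (2 * 589824)) < c1 * tau ^ 2 * W / 589824).
    { assert (0 < c1 * tau^2 * W) by (apply Rmult_lt_0_compat; nra).
      replace (W * (c1 * tau ^ 2 / (2 * 589824))) with (c1 * tau^2 * W / 589824 / 2) by field. lra. }
    lra. }
  lra.
Qed.
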